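(* Let $k\ge 2$ be an integer and let $G=\Theta(2,2,2k)$. Then $P_\ell(G,m)=P(G,m)$ for every integer $m\ge 3$.
   Context: $\Theta(l_1,l_2,l_3)$ denotes the graph consisting of two end vertices joined by three internally disjoint paths of lengths $l_1,l_2,l_3$. All graphs are finite and simple. For a list assignment $L$ (assigning a set $L(v)$ of colors to each vertex $v$), $P(G,L)$ is the number of proper colorings $f$ of $G$ with $f(v)\in L(v)$ for all $v$; an $m$-assignment has $|L(v)|=m$ for all $v$. $P(G,m)$ is the chromatic polynomial of $G$, and the list color function $P_\ell(G,m)$ is the minimum of $P(G,L)$ over all $m$-assignments $L$ for $G$. *)

(* Defs.v *)
From mathcomp Require Import all_boot.
Set Implicit Arguments. Unset Strict Implicit. Unset Printing Implicit Defensive.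

(* A finite simple graph: vertex finType V with adjacency relation e
   (symmetric and irreflexive for the theta graphs below). *)

Definition proper (V : finType) (e : rel V) (f : V -> nat) : bool :=
  [forall x, forall y, e x y ==> (f x != f y)].

Definition m_assignment (V : finType) (m : nat) (L : V -> seq nat) : Prop :=
  forall v, uniq (L v) /\ size (L v) = m.

Definition color_bound (V : finType) (L : V -> seq nat) : nat :=
  \max_(v : V) \max_(c <- L v) c.+1.

(* P(G,L): number of proper colourings f with f v \in L v for all v.
   Every such colouring takes values below color_bound L, so it is
   counted among functions V -> 'I_(color_bound L). *)
Definition P_list (V : finType) (e : rel V) (L : V -> seq nat) : nat :=
  #|[set f : {ffun V -> 'I_(color_bound L)} |
      [forall v, (val (f v) \in L v)] && proper e (fun v => val (f v))]|.

Definition chrom (V : finType) (e : rel V) (m : nat) : nat :=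
  #|[set f : {ffun V -> 'I_m} | proper e (fun v => val (f v))]|.

Definition is_list_color_fun (V : finType) (e : rel V) (m n : nat) : Prop :=
  (exists L : V -> seq nat, m_assignment m L /\ P_list e L = n) /\
  (forall L : V -> seq nat, m_assignment m L -> n <= P_list e L).

(* Theta graph Theta(l_0,l_1,l_2): two end vertices (inl false / inl true)
   and, for each path i, internal vertices (i, j) with j < l_i - 1, where
   (i, j) is at distance j+1 from the end inl false along path i. *)
Definition tl (l1 l2 l3 : nat) (i : 'I_3) : nat := nth 0 [:: l1; l2; l3] i.

Definition theta_vertex (l : 'I_3 -> nat) : finType :=
  (bool + {i : 'I_3 & 'I_(l i).-1})%type.

Definition tpos (l : 'I_3 -> nat) (x : theta_vertex l) (i : 'I_3) : option nat :=
  match x with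
  | inl false => Some 0
  | inl true => Some (l i)
  | inr (existT i' j) => if i' == i then Some (nat_of_ord j).+1 else None
  end.

Definition theta_adj (l : 'I_3 -> nat) : rel (theta_vertex l) :=
  fun x y => [exists i : 'I_3,
    match tpos x i, tpos y i with
    | Some a, Some b => (a.+1 == b) || (b.+1 == a)
    | _, _ => false
    end].
Arguments theta_adj l : clear implicits.
Arguments chrom V e m : clear implicits.
Arguments is_list_color_fun V e m n : clear implicits.

(* Main.v *)
Require Import Defs.
From mathcomp Require Import all_boot zify.
Import Defs.
Set Implicit Arguments. Unset Strict Implicit. Unset Printing Implicit Defensive.

Section Gen.
Variable C : finType.

Fixpoint pe (W : nat -> {set C}) (x : C) (r : nat) (y : C) : nat :=
  match r with
  | 0 => (x != y)
  | r'.+1 => \sum_(d in W r' | d != y) pe W x r' d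
  end.

Lemma sum_sub (A B : {set C}) (F : C -> nat) :
  A \subset B -> \sum_(i in A) F i <= \sum_(i in B) F i.
Proof.
move=> sAB; rewrite [X in _ <= X](big_setID A) /= (setIidPr sAB).
exact: leq_addr.
Qed.

Lemma subset_card_ex (A : {set C}) n :
  n <= #|A| -> exists2 B : {set C}, B \subset A & #|B| = n.
Proof.
elim: n => [|n IH] H; first by exists set0; rewrite ?sub0set ?cards0.
have [B sBA cB] := IH (ltnW H).
have : B \proper A by rewrite properEcard sBA cB.
case/properP=> _ [a aA aB].
exists (a |: B); first by rewrite subUset sub1set aA sBA.
by rewrite cardsU1 aB cB.
Qed.

Lemma sum_neq (Z : {set C}) (d : C) :
  \sum_(z in Z) (d != z) = #|Z| - (d \in Z).
Proof.
case: (boolP (d \in Z)) => dZ.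
  rewrite (bigD1 d) //= eqxx add0n (cardsD1 d Z) dZ /= add1n subn1 /=.
  rewrite -sum1_card; apply: eq_big => [z|z /andP [_ zd]]; first by rewrite !inE andbC.
  by rewrite eq_sym zd.
rewrite subn0 -sum1_card; apply: eq_bigr => z zZ.
by case: eqP zZ dZ => // ->->.
Qed.

Fixpoint mu (m r j : nat) : nat :=
  match r with
  | 0 => j.-1
  | r'.+1 => if j is 0 then 0 else j.-1 * mu m r' m + mu m r' (m - j)
  end.

Lemma pe_lb m (W : nat -> {set C}) (HW : forall i, #|W i| = m) r x (Z : {set C}) :
  #|Z| <= m -> mu m r #|Z| <= \sum_(z in Z) pe W x r z.
Proof.
elim: r x Z => [|r IH] x Z HZ /=.
  by rewrite sum_neq; case: (x \in Z); lia.
case cZ: #|Z| => [|J]; first by [].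
have E : \sum_(z in Z) \sum_(d in W r | d != z) pe W x r d =
         \sum_(d in W r) (\sum_(z in Z) (d != z)) * pe W x r d.
  rewrite (eq_bigr (fun z => \sum_(d in W r) (if d != z then pe W x r d else 0)));
    last by move=> z _; rewrite big_mkcondr.
  rewrite exchange_big /=; apply: eq_bigr => d _; rewrite big_distrl /=.
  by apply: eq_bigr => z _; case: (d != z); rewrite ?mul1n ?mul0n.
rewrite E.
have E2 : forall d, (\sum_(z in Z) (d != z)) * pe W x r d =
   J * pe W x r d + (d \notin Z) * pe W x r d.
  by move=> d; rewrite sum_neq cZ; case: (d \in Z) => /=; rewrite ?subn0 ?subn1 ?mulSn; lia.
rewrite (eq_bigr _ (fun d _ => E2 d)) big_split /= -big_distrr /=.
have H1 := IH x (W r); rewrite HW leqnn in H1.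
have [B sB cB] : exists2 B : {set C}, B \subset W r :\: Z & #|B| = m - J.+1.
  apply: subset_card_ex; rewrite cardsD.
  have : #|W r :&: Z| <= #|Z| by apply: subset_leq_card; apply: subsetIr.
  by rewrite HW cZ; lia.
have H2 := IH x B; rewrite cB leq_subr in H2.
have H3 : \sum_(z in B) pe W x r z <= \sum_(d in W r) (d \notin Z) * pe W x r d.
  apply: (leq_trans (sum_sub _ sB)).
  rewrite [X in _ <= X](big_setID Z) /= [X in _ <= _ + X](eq_bigr (fun d => pe W x r d)).
    exact: leq_addl.
  by move=> d; rewrite inE => /andP [/negbTE -> _]; rewrite mul1n.
apply: leq_add; last exact: (leq_trans (H2 isT) H3).
by rewrite leq_mul2l (H1 isT) orbT.
Qed.
End Gen.

Fixpoint cseq (m r : nat) : nat :=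
  match r with
  | 0 => 0
  | r'.+1 => m.-1 * cseq m r' + (if odd r' then 0 else m - 2)
  end.

Lemma cseq_closed m r : 2 <= m ->
  m * cseq m r + (if odd r then 1 else m.-1) = m.-1 ^ r.+1.
Proof.
move=> m1; elim: r => [|r IH] /=; first by rewrite muln0 expn1.
rewrite expnS -IH; case: (odd r) => /=; nia.
Qed.

Lemma mu0 m r : mu m r 0 = 0.
Proof. by case: r. Qed.

Lemma mu_vals m r : 2 <= m ->
  [/\ mu m r m = m.-1 ^ r.+1, mu m r 1 = cseq m r & mu m r m.-1 = cseq m r.+1].
Proof.
move=> m2; have Hc := cseq_closed r m2.
elim: r Hc => [|r IH] Hc.
  by rewrite /= expn1; split=> //; lia.
have [IHm IH1 IHm1] := IH (cseq_closed r m2).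
clear IH; move: m2 IHm IH1 IHm1 Hc; case: m => [|[|n]] // _ IHm IH1 IHm1 Hc.
have E1 : n.+2 - n.+1 = 1 by lia.
have E2 : n.+2 - 1 = n.+1 by lia.
split.
- by rewrite /= subnn mu0 addn0 IHm /= -expnS.
- by rewrite /= subn1 /= IHm1 mul0n.
- have Hc2 := cseq_closed r (isT : 2 <= n.+2).
  rewrite /= E1 IHm IH1 /= in Hc2 *.
  case: (odd r) Hc2 => /= Hc2; nia.
Qed.

Section G3.
Variable C : finType.

Lemma sum_eq1 (A : {set C}) (x : C) : \sum_(d in A) (x == d) = (x \in A).
Proof.
case: (boolP (x \in A)) => xA.
  rewrite (bigD1 x) //= eqxx big1 // => d /andP [_ dx].
  by rewrite eq_sym (negbTE dx).
by rewrite big1 // => d dA; case: eqP dA xA => // ->->.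
Qed.

Lemma sum_D1 (A : {set C}) y (F : C -> nat) :
  \sum_(d in A | d != y) F d = \sum_(d in A :\ y) F d.
Proof. by apply: eq_bigl => d; rewrite !inE andbC. Qed.

Lemma pe_const m (W0 : {set C}) (W : nat -> {set C}) : 2 <= m ->
  #|W0| = m -> (forall i, W i = W0) -> forall r x y, x \in W0 -> y \in W0 ->
  pe W x r y = cseq m r + (if odd r then x == y else x != y).
Proof.
move=> m2 cW HW; elim=> [|r IH] x y xW yW; first by [].
rewrite /= HW sum_D1.
rewrite (eq_bigr (fun d => cseq m r + (if odd r then x == d else x != d))); last first.
  by move=> d; rewrite inE => /andP [_ dW]; rewrite IH.
rewrite big_split /= sum_nat_const (cardsD1 y W0) yW /= in cW *.
have cD : #|W0 :\ y| = m.-1 by move: cW; rewrite add1n; lia.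
case: (odd r) => /=.
- rewrite sum_eq1 !inE xW andbT cD.
  by rewrite addn0.
- rewrite (sum_neq (W0 :\ y) x) !inE xW andbT cD.
  have H2 : (x != y) -> 1 <= m.-1.
    by move=> xy; rewrite -cD; apply/card_gt0P; exists x; rewrite !inE xy xW.
  case: (x == y) H2 => /= H2; [|have := H2 isT]; lia.
Qed.
End G3.

Section G4.
Variable C : finType.
Implicit Types (W : nat -> {set C}) (X : {set C}).

Lemma pe_ext W W' x r y : (forall i, i < r -> W i = W' i) -> pe W x r y = pe W' x r y.
Proof.
elim: r y => [|r IH] y H //=.
rewrite H //; apply: eq_bigr => d _; apply: IH => i ir; apply: H; exact: ltnW.
Qed.

Lemma pe_cat W x s t y :
  pe W x (s + t.+1) y = \sum_(z in W s) pe W x s z * pe (fun i => W (s.+1 + i)) z t y.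
Proof.
elim: t y => [|t IH] y.
  rewrite addn1 /= big_mkcondr /=; apply: eq_bigr => z _.
  by case: (z != y); rewrite ?muln1 ?muln0.
rewrite addnS /=.
rewrite (eq_bigr (fun d => \sum_(z in W s) pe W x s z * pe (fun i => W (s.+1 + i)) z t d));
  last by move=> d _; rewrite IH.
rewrite exchange_big /=; apply: eq_bigr => z _; rewrite big_distrr /=.
by rewrite addSnnS.
Qed.

Definition cyc W X r := \sum_(x in X) pe W x r x.

Definition rotW W X s t := fun i =>
  if i < t then W (s.+1 + i) else if i == t then X else W (i - t.+1).

Lemma cyc_rot W X s t : cyc W X (s + t.+1) = cyc (rotW W X s t) (W s) (t + s.+1).
Proof.
rewrite /cyc.
rewrite (eq_bigr (fun x => \sum_(z in W s) pe W x s z * pe (fun i => W (s.+1 + i)) z t x));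
  last by move=> x _; rewrite pe_cat.
rewrite exchange_big /=; apply: eq_bigr => z _.
rewrite pe_cat /rotW ltnn eqxx; apply: eq_bigr => x _.
rewrite mulnC; congr (_ * _).
  by apply: pe_ext => i it; rewrite it.
apply: pe_ext => i _ /=.
have -> : (t.+1 + i < t) = false by lia.
have -> : (t.+1 + i == t) = false by lia.
by congr (W _); lia.
Qed.

Lemma cyc_diff m W X r c : 2 <= m -> (forall i, #|W i| = m) -> #|X| = m ->
  c \in X -> c \notin W r ->
  m.-1 ^ r.+1 + m.-1 * cseq m r.+1 <= cyc W X r.+1.
Proof.
move=> m2 HW cX cXX cW.
have [Hm H1 _] := mu_vals r m2.
have [_ H1' _] := mu_vals r.+1 m2.
rewrite /cyc (bigD1 c) //=; apply: leq_add.
  rewrite (eq_bigl (fun d => d \in W r)); last first.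
    by move=> d; case dW: (d \in W r) => //=; apply/eqP => dc; rewrite -dc dW in cW.
  have := pe_lb HW r c (Z := W r); rewrite HW leqnn Hm; exact.
have -> : m.-1 * cseq m r.+1 = \sum_(i in X | i != c) cseq m r.+1.
  rewrite sum_nat_const; congr (_ * _).
  rewrite -cX (cardsD1 c X) cXX add1n /=; apply: eq_card => i; rewrite !inE andbC //.
apply: leq_sum => x _.
have := pe_lb HW r.+1 x (Z := [set x]); rewrite cards1 big_set1 H1'.
by apply; lia.
Qed.

Lemma cyc_arith m r : 3 <= m -> odd r -> 3 <= r ->
  m * (cseq m r).+1 <= m.-1 ^ r + m.-1 * cseq m r.
Proof.
move=> m3 odr r3.
have Hc := cseq_closed r (ltnW m3); rewrite odr expnS in Hc.
case: m m3 Hc => [|q] // m3 /= Hc.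
have HP : q ^ 3 <= q ^ r by apply: leq_pexp2l => //; lia.
have H3 : q ^ 3 = q * q * q by rewrite !expnS expn0 muln1 mulnA.
rewrite H3 in HP.
move: Hc HP; set P := q ^ r; set c := cseq q.+1 r => Hc HP.
nia.
Qed.

Lemma cyc_lb m W X r : 3 <= m -> odd r -> 3 <= r -> #|X| = m ->
  (forall i, #|W i| = m) -> m * (cseq m r).+1 <= cyc W X r.
Proof.
move=> m3 odr r3 cX HW.
have m2 : 2 <= m by lia.
case: (boolP [exists s : 'I_r, ~~ (W s \subset (if val s is s'.+1 then W s' else X))]).
  case/existsP=> [[s sr]] /= /subsetPn [c cWs cprev].
  have [t Er] : exists t, r = s + t.+1 by exists (r - s.+1); lia.
  have Er' : r = (t + s).+1 by lia.
  have Hb : m * (cseq m r).+1 <= m.-1 ^ (t + s).+1 + m.-1 * cseq m (t + s).+1.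
    by rewrite -Er'; exact: cyc_arith.
  rewrite [in cyc W X r]Er cyc_rot.
  have -> : t + s.+1 = (t + s).+1 by lia.
  apply: leq_trans Hb (cyc_diff (c := c) m2 _ _ cWs _).
  - by move=> i; rewrite /rotW; case: ifP => _; [|case: ifP => _]; rewrite ?HW ?cX.
  - exact: HW.
  - rewrite /rotW.
    move: cprev; clear -Er; case: s Er => [|s] Er cprev.
      by rewrite addn0 ltnn eqxx.
    have -> : (t + s.+1 < t) = false by lia.
    have -> : (t + s.+1 == t) = false by lia.
    by have -> : t + s.+1 - t.+1 = s by lia.
move/existsPn=> Hall.
have sub : forall i, i < r -> W i \subset X.
  elim=> [|i IH] ir.
    by have := Hall (Ordinal ir); rewrite negbK.
  apply: subset_trans (IH (ltnW ir)).
  by have := Hall (Ordinal ir); rewrite negbK.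
have EW : forall i, i < r -> W i = X.
  move=> i ir; apply/eqP; rewrite eqEcard sub // cX HW leqnn //.
rewrite /cyc (eq_bigr (fun x => cseq m r + 1)); last first.
  move=> x xX; rewrite (@pe_ext W (fun _ => X)) //.
  by rewrite (pe_const m2 cX (fun _ => erefl X) r xX xX) odr eqxx.
by rewrite sum_nat_const cX addn1 mulnC.
Qed.
End G4.

Section G5.
Variable C : finType.
Variable W : nat -> {set C}.

Definition pathok r (x y : C) (g : {ffun 'I_r -> C}) : bool :=
  [forall i : 'I_r, g i \in W i] &&
  path (fun a b => a != b) x (rcons [seq g i | i <- enum 'I_r] y).

Definition extf r (g : {ffun 'I_r -> C}) (c : C) : {ffun 'I_r.+1 -> C} :=
  [ffun i : 'I_r.+1 => if insub (val i) is Some j then g j else c].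
Definition restf r (g : {ffun 'I_r.+1 -> C}) : {ffun 'I_r -> C} :=
  [ffun j => g (widen_ord (leqnSn r) j)].

Lemma extf_widen r g c (j : 'I_r) : extf g c (widen_ord (leqnSn r) j) = g j.
Proof. by rewrite ffunE /= valK. Qed.

Lemma extf_max r g c : extf g c (@ord_max r) = c.
Proof. by rewrite ffunE /= insubF // ltnn. Qed.

Lemma sum_ffunS r (F : {ffun 'I_r.+1 -> C} -> nat) :
  \sum_g F g = \sum_(g : {ffun 'I_r -> C}) \sum_(c : C) F (extf g c).
Proof.
rewrite pair_big /=.
rewrite (reindex (fun p : {ffun 'I_r -> C} * C => extf p.1 p.2)) /=; last first.
  apply: onW_bij; exists (fun g => (restf g, g ord_max)).
    move=> [g c] /=; rewrite extf_max; congr (_, _).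
    by apply/ffunP => j; rewrite ffunE extf_widen.
  move=> g; apply/ffunP => i; rewrite ffunE /=.
  case: insubP => [j _ Ej|].
    by rewrite ffunE; congr (g _); apply: val_inj; rewrite /= Ej.
  move=> Hn; congr (g _); apply: val_inj => /=.
  by have := ltn_ord i; move: Hn; rewrite /=; lia.
by apply: eq_bigl.
Qed.

Lemma map_extf r g c :
  [seq extf g c i | i <- enum 'I_r.+1] = rcons [seq g i | i <- enum 'I_r] c.
Proof.
rewrite enum_ordSr map_rcons extf_max -map_comp; congr (rcons _ _).
by apply: eq_map => j /=; rewrite extf_widen.
Qed.

Lemma pathok_ext r x y (g : {ffun 'I_r -> C}) c :
  pathok x y (extf g c) = [&& c \in W r, c != y & @pathok r x c g].
Proof.
rewrite /pathok map_extf rcons_path last_rcons.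
have -> : [forall i : 'I_r.+1, extf g c i \in W i] =
          [forall i : 'I_r, g i \in W i] && (c \in W r).
  apply/forallP/andP => [H|[/forallP H1 H2] i].
    split; last by have := H ord_max; rewrite extf_max.
    by apply/forallP => j; have := H (widen_ord (leqnSn r) j); rewrite extf_widen.
  case: (ltnP i r) => ir.
    have -> : i = widen_ord (leqnSn r) (Ordinal ir) by apply: val_inj.
    by rewrite extf_widen.
  have -> : i = ord_max by apply: val_inj => /=; have := ltn_ord i; lia.
  by rewrite extf_max.
by case: (c \in W r); case: (c != y); case: [forall i : 'I_r, g i \in W i];
   rewrite /= ?andbF ?andbT.
Qed.

Lemma path_count r x y : \sum_(g : {ffun 'I_r -> C}) pathok x y g = pe W x r y.
Proof.
elim: r y => [|r IH] y.
  rewrite /= (eq_bigr (fun _ => nat_of_bool (x != y))); last first.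
    move=> g _; rewrite /pathok enum_ord0 /= andbT.
    by have -> : [forall i : 'I_0, g i \in W i] by apply/forallP => -[].
  by rewrite sum_nat_const card_ffun card_ord expn0 mul1n.
rewrite sum_ffunS /=.
rewrite (eq_bigr (fun g => \sum_(c : C) nat_of_bool ((c \in W r) && (c != y)) * pathok x c g)); last first.
  by move=> g _; apply: eq_bigr => c _; rewrite pathok_ext; case: (c \in W r); case: (c != y); rewrite /= ?mul1n ?mul0n.
rewrite exchange_big /= [RHS]big_mkcond /=; apply: eq_bigr => c _.
rewrite -big_distrr /= IH.
by case: (c \in W r); case: (c != y); rewrite /= ?mul1n ?mul0n.
Qed.
End G5.

Section Theta.
Variable k : nat.
Hypothesis k1 : 1 <= k.
Local Notation l := (tl 2 2 (2 * k)).
Local Notation V := (theta_vertex l).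
Local Notation r := (2 * k).-1.

Definition i0 : 'I_3 := Ordinal (isT : 0 < 3).
Definition i1 : 'I_3 := Ordinal (isT : 1 < 3).
Definition i2 : 'I_3 := Ordinal (isT : 2 < 3).

Definition vu : V := inl false.
Definition vw : V := inl true.
Definition va : V := inr (existT _ i0 ord0).
Definition vb : V := inr (existT _ i1 ord0).
Definition vp (j : 'I_r) : V := inr (existT _ i2 j).

Lemma vclass (v : V) : v = vu \/ v = vw \/ v = va \/ v = vb \/ exists j, v = vp j.
Proof.
case: v => [[]|[i j]]; [by right; left|by left|].
case: i j => [[|[|[|i]]] Hi] j //.
- do 2 right; left; rewrite /va /i0; have -> : Hi = isT by apply: eq_irrelevance.
  by move: j; rewrite /= => j; rewrite (ord1 j).
- do 3 right; left; rewrite /vb /i1; have -> : Hi = isT by apply: eq_irrelevance.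
  by move: j; rewrite /= => j; rewrite (ord1 j).
- do 4 right; exists j; rewrite /vp /i2; have -> : Hi = isT by apply: eq_irrelevance.
  by [].
Qed.

Variable C : finType.
Definition TT := (C * C * C * C * {ffun 'I_r -> C})%type.

Definition hcol (t : TT) : {ffun V -> C} :=
  let: ((((x, y), ca), cb), g) := t in
  [ffun v : V => match v with
   | inl false => x
   | inl true => y
   | inr (existT i j) =>
       if val i == 0 then ca else if val i == 1 then cb else
       if (insub (val j) : option 'I_r) is Some j' then g j' else x
   end].

Definition hinv (f : {ffun V -> C}) : TT :=
  ((((f vu, f vw), f va), f vb), [ffun j => f (vp j)]).

Lemma hcol_u x y ca cb g : hcol ((((x, y), ca), cb), g) vu = x.
Proof. by rewrite ffunE. Qed.
Lemma hcol_w x y ca cb g : hcol ((((x, y), ca), cb), g) vw = y.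
Proof. by rewrite ffunE. Qed.
Lemma hcol_a x y ca cb g : hcol ((((x, y), ca), cb), g) va = ca.
Proof. by rewrite ffunE. Qed.
Lemma hcol_b x y ca cb g : hcol ((((x, y), ca), cb), g) vb = cb.
Proof. by rewrite ffunE. Qed.
Lemma hcol_p x y ca cb g j : hcol ((((x, y), ca), cb), g) (vp j) = g j.
Proof. by rewrite ffunE /= valK. Qed.

Lemma hcol_bij : bijective hcol.
Proof.
exists hinv.
  move=> [[[[x y] ca] cb] g]; rewrite /hinv hcol_u hcol_w hcol_a hcol_b.
  by congr (_, _); apply/ffunP => j; rewrite ffunE hcol_p.
move=> f; apply/ffunP => v; rewrite /hinv.
by case: (vclass v) => [->|[->|[->|[->|[j ->]]]]];
  rewrite ?hcol_u ?hcol_w ?hcol_a ?hcol_b ?hcol_p ?ffunE.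
Qed.

Lemma l_i2 : l i2 = r.+1.
Proof. rewrite /tl /=; lia. Qed.

Definition pseq (x y : C) (g : {ffun 'I_r -> C}) := x :: rcons [seq g j | j <- enum 'I_r] y.

Definition colI x y ca cb g (i : 'I_3) (p : nat) : C :=
  if val i == 2 then nth x (pseq x y g) p
  else if p == 0 then x else if p == 1 then (if val i == 0 then ca else cb) else y.

Lemma nth_pseq_p x y g (j : 'I_r) : nth x (pseq x y g) j.+1 = g j.
Proof.
rewrite /= nth_rcons size_map size_enum_ord ltn_ord (nth_map j) ?size_enum_ord //.
by rewrite nth_ord_enum.
Qed.

Lemma nth_rc_p x y (g : {ffun 'I_r -> C}) (j : 'I_r) : nth x (rcons [seq g i | i <- enum 'I_r] y) j = g j.
Proof. exact: (nth_pseq_p x y g j). Qed.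

Lemma nth_pseq_w x y g : nth x (pseq x y g) r.+1 = y.
Proof. by rewrite /= nth_rcons size_map size_enum_ord ltnn eqxx. Qed.

Lemma tpos_col x y ca cb g v i p : tpos v i = Some p ->
  hcol ((((x, y), ca), cb), g) v = colI x y ca cb g i p /\ p <= l i.
Proof.
case: (vclass v) => [->|[->|[->|[->|[j ->]]]]];
  rewrite ?hcol_u ?hcol_w ?hcol_a ?hcol_b ?hcol_p /colI;
  case: i => [[|[|[|i]]] Hi] //= [<-] //=.
all: try (have -> : l (Ordinal Hi) = r.+1 by rewrite /tl /=; lia).
all: try by rewrite nth_pseq_w.
all: try by split; [exact: (esym (nth_rc_p x y g j)) | exact: ltnW (ltn_ord j)].
Qed.

Definition conds (x y ca cb : C) (g : {ffun 'I_r -> C}) :=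
  [&& ca != x, ca != y, cb != x, cb != y &
      path (fun a b => a != b) x (rcons [seq g i | i <- enum 'I_r] y)].

Lemma colI_adj x y ca cb g i p : conds x y ca cb g -> p.+1 <= l i ->
  colI x y ca cb g i p != colI x y ca cb g i p.+1.
Proof.
case/and5P=> ax ay bx by_ pth.
rewrite /colI; case: i => [[|[|[|i]]] Hi] //=.
- by case: p => [|[|p]] //= _; rewrite eq_sym.
- by case: p => [|[|p]] //= _; rewrite eq_sym.
- move=> Hp; move/(pathP x): pth => /(_ p); rewrite size_rcons size_map size_enum_ord.
  by apply; move: Hp; rewrite /tl /=; lia.
Qed.

Definition vert (n : nat) : V :=
  if n is n'.+1 then (if (insub n' : option 'I_r) is Some j then vp j else vw) else vu.

Lemma tpos_vert n : n <= r.+1 -> tpos (vert n) i2 = Some n.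
Proof.
case: n => [|n] //= Hn.
case: insubP => [j _ Ej|Hnr] /=.
  by rewrite Ej.
have -> : n = r by lia.
by rewrite -l_i2.
Qed.

Variable enc : C -> nat.
Hypothesis enc_inj : injective enc.

Lemma proper_hcol x y ca cb g :
  proper (theta_adj l) (fun v => enc (hcol ((((x, y), ca), cb), g) v)) = conds x y ca cb g.
Proof.
set t := ((((x, y), ca), cb), g).
apply/idP/idP.
  move/forallP=> H.
  have pr : forall v1 v2, theta_adj l v1 v2 -> hcol t v1 != hcol t v2.
    by move=> v1 v2 a12; have := H v1 => /forallP /(_ v2); rewrite a12 /= inj_eq.
  have P1 : forall v1 v2, theta_adj l v1 v2 -> hcol t v1 != hcol t v2 := pr.
  apply/and5P; split.
  - by have := pr va vu; rewrite hcol_a hcol_u; apply; apply/existsP; exists i0.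
  - by have := pr va vw; rewrite hcol_a hcol_w; apply; apply/existsP; exists i0.
  - by have := pr vb vu; rewrite hcol_b hcol_u; apply; apply/existsP; exists i1.
  - by have := pr vb vw; rewrite hcol_b hcol_w; apply; apply/existsP; exists i1.
  apply/(pathP x) => n; rewrite size_rcons size_map size_enum_ord => Hn.
  have T1 := tpos_vert (ltnW Hn).
  have T2 := tpos_vert Hn.
  have := pr (vert n) (vert n.+1).
  rewrite (tpos_col x y ca cb g T1).1 (tpos_col x y ca cb g T2).1 /colI /=.
  apply; apply/existsP; exists i2; by rewrite T1 T2 eqxx.
move=> cd; apply/forallP => v1; apply/forallP => v2; apply/implyP => /existsP [i].
case E1: (tpos v1 i) => [p|] //; case E2: (tpos v2 i) => [q|] // Hpq.
have [-> Hp] := tpos_col x y ca cb g E1.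
have [-> Hq] := tpos_col x y ca cb g E2.
rewrite inj_eq //.
case/orP: Hpq => /eqP Hpq.
  by rewrite -Hpq; apply: colI_adj; rewrite // Hpq.
by rewrite -Hpq eq_sym; apply: colI_adj; rewrite // Hpq.
Qed.

Lemma mem_hcol (S : V -> {set C}) x y ca cb g :
  [forall v, hcol ((((x, y), ca), cb), g) v \in S v] =
  [&& x \in S vu, y \in S vw, ca \in S va, cb \in S vb & [forall j, g j \in S (vp j)]].
Proof.
apply/forallP/and5P => [H|[Hu Hw Ha Hb /forallP Hp] v].
  split; [move: (H vu)|move: (H vw)|move: (H va)|move: (H vb)|];
    rewrite ?hcol_u ?hcol_w ?hcol_a ?hcol_b //.
  by apply/forallP => j; move: (H (vp j)); rewrite hcol_p.
by case: (vclass v) => [->|[->|[->|[->|[j ->]]]]];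
  rewrite ?hcol_u ?hcol_w ?hcol_a ?hcol_b ?hcol_p.
Qed.

Definition Wp (S : V -> {set C}) (n : nat) : {set C} :=
  if (insub n : option 'I_r) is Some j then S (vp j) else S vu.

Lemma sum_TT (F : TT -> nat) :
  \sum_(t : TT) F t = \sum_x \sum_y \sum_ca \sum_cb \sum_g F ((((x, y), ca), cb), g).
Proof.
rewrite (eq_bigr (fun t => F (t.1, t.2))); last by case.
rewrite -(pair_bigA _ (fun a b => F (a, b))) /=.
rewrite (eq_bigr (fun t => \sum_g F ((t.1, t.2), g))); last by case.
rewrite -(pair_bigA _ (fun a b => \sum_g F ((a, b), g))) /=.
rewrite (eq_bigr (fun t => \sum_cb \sum_g F (((t.1, t.2), cb), g))); last by case.
rewrite -(pair_bigA _ (fun a b => \sum_cb \sum_g F (((a, b), cb), g))) /=.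
rewrite (eq_bigr (fun t => \sum_ca \sum_cb \sum_g F ((((t.1, t.2), ca), cb), g))); last by case.
by rewrite -(pair_bigA _ (fun a b => \sum_ca \sum_cb \sum_g F ((((a, b), ca), cb), g))) /=.
Qed.

Lemma sum_mem_card (A : {set C}) : \sum_c nat_of_bool (c \in A) = #|A|.
Proof. by rewrite -sum1_card [RHS]big_mkcond /=; apply: eq_bigr => c _; case: (c \in A). Qed.

Lemma count_formula (S : V -> {set C}) :
  #|[set f : {ffun V -> C} | [forall v, f v \in S v] &&
       proper (theta_adj l) (fun v => enc (f v))]| =
  \sum_(x in S vu) \sum_(y in S vw)
     #|S va :\ x :\ y| * #|S vb :\ x :\ y| * pe (Wp S) x r y.
Proof.
set P := fun f : {ffun V -> C} => [forall v, f v \in S v] && proper (theta_adj l) (fun v => enc (f v)).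
have -> : #|[set f | P f]| = \sum_f nat_of_bool (P f).
  by rewrite -sum1_card big_mkcond /=; apply: eq_bigr => f _; rewrite inE; case: (P f).
rewrite (reindex hcol) /=; last exact: onW_bij hcol_bij.
have E : forall x y ca cb g, nat_of_bool (P (hcol ((((x, y), ca), cb), g))) =
    (if x \in S vu then if y \in S vw then 1 else 0 else 0) *
    ((ca \in S va :\ x :\ y) * ((cb \in S vb :\ x :\ y) * pathok (Wp S) x y g)).
  move=> x y ca cb g; rewrite /P mem_hcol proper_hcol /conds /pathok !inE.
  have -> : [forall i : 'I_r, g i \in Wp S i] = [forall j, g j \in S (vp j)].
    by apply: eq_forallb => j; rewrite /Wp valK.
  case: (x \in S vu); case: (y \in S vw); case: (ca \in S va); case: (cb \in S vb);
  case: (ca != x); case: (ca != y); case: (cb != x); case: (cb != y);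
  by rewrite /= ?andbF ?mul0n ?muln0 ?mul1n ?muln1.
rewrite sum_TT [RHS]big_mkcond /=; apply: eq_bigr => x _.
rewrite (eq_bigr _ (fun y _ => eq_bigr _ (fun ca _ => eq_bigr _ (fun cb _ => eq_bigr _ (fun g _ => E x y ca cb g))))).
case: (x \in S vu).
  rewrite [RHS]big_mkcond /=; apply: eq_bigr => y _.
  case: (y \in S vw).
    rewrite -(path_count (Wp S) r x y) -(sum_mem_card (S va :\ x :\ y)) -(sum_mem_card (S vb :\ x :\ y)).
    rewrite -mulnA big_distrl /=; apply: eq_bigr => ca _.
    rewrite big_distrl big_distrr /=; apply: eq_bigr => cb _.
    by rewrite !big_distrr; apply: eq_bigr => g _; rewrite mul1n.
  by rewrite big1 // => ca _; rewrite big1 // => cb _; rewrite big1 // => g _; rewrite mul0n.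
by rewrite big1 // => y _; rewrite big1 // => ca _; rewrite big1 // => cb _; rewrite big1 // => g _; rewrite mul0n.
Qed.
End Theta.

Section G7.
Variable C : finType.
Implicit Types (A X Y : {set C}).

Lemma card_D2 A (x y : C) :
  #|A :\ x :\ y| + (x \in A) + ((y != x) && (y \in A)) = #|A|.
Proof.
rewrite (cardsD1 x A) (cardsD1 y (A :\ x)) !inE; lia.
Qed.

Lemma sum_eqF Y x (F : C -> nat) : \sum_(y in Y) (x == y) * F y = (x \in Y) * F x.
Proof.
case: (boolP (x \in Y)) => xY.
  rewrite (bigD1 x) //= eqxx mul1n big1 ?addn0 // => y /andP [_ yx].
  by rewrite eq_sym (negbTE yx).
by rewrite big1 // => y yY; case: eqP yY xY => // ->->.
Qed.

Lemma sum_card_pred X (P : pred C) : \sum_(x in X) nat_of_bool (P x) = #|[set x in X | P x]|.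
Proof.
rewrite -sum1_card [RHS]big_mkcond [LHS]big_mkcond /=; apply: eq_bigr => x _.
by rewrite inE; case: (x \in X); case: (P x).
Qed.

Definition Kc X Y A := \sum_(x in X) \sum_(y in Y) (x != y) * ((x \notin A) + (y \notin A)).

Lemma Kc_lb m X Y A : 2 <= m -> #|X| = m -> #|Y| = m -> #|A| = m ->
  m * (m - #|X :&: Y|) <= Kc X Y A.
Proof.
move=> m2 cX cY cA.
have E : Kc X Y A = \sum_z ((z \in X) * (z \notin A) * #|Y :\ z| + (z \in Y) * (z \notin A) * #|X :\ z|).
  rewrite /Kc big_split /=.
  have -> : \sum_(x in X) \sum_(y in Y) (x != y) * ((x \notin A) + (y \notin A)) =
     \sum_(x in X) \sum_(y in Y) (x != y) * (x \notin A) + \sum_(y in Y) \sum_(x in X) (x != y) * (y \notin A).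
    rewrite [X in _ = _ + X]exchange_big /= -big_split /=; apply: eq_bigr => x _.
    by rewrite -big_split /=; apply: eq_bigr => y _; rewrite mulnDr.
  congr (_ + _).
    rewrite [LHS]big_mkcond /=; apply: eq_bigr => x _.
    case: (x \in X); rewrite ?mul0n //= mul1n -big_distrl /= mulnC.
    congr (_ * _); rewrite (sum_neq Y x) (cardsD1 x Y); lia.
  rewrite [LHS]big_mkcond /=; apply: eq_bigr => y _.
  case: (y \in Y); rewrite ?mul0n //= mul1n -big_distrl /= mulnC.
  congr (_ * _); under eq_bigr do rewrite eq_sym.
  rewrite (sum_neq X y) (cardsD1 y X); lia.
have H1 : forall z, m * ((z \in X :|: Y) && (z \notin A)) <=
   (z \in X) * (z \notin A) * #|Y :\ z| + (z \in Y) * (z \notin A) * #|X :\ z|.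
  move=> z; rewrite !inE.
  have := cardsD1 z Y; have := cardsD1 z X; rewrite cX cY.
  by case: (z \in X); case: (z \in Y); case: (z \in A) => /=; lia.
rewrite E. apply: leq_trans; last by apply: leq_sum => z _; exact: H1.
rewrite -big_distrr /= leq_mul2l; apply/orP; right.
have -> : \sum_z nat_of_bool ((z \in X :|: Y) && (z \notin A)) = #|(X :|: Y) :\: A|.
  by rewrite -sum1_card [RHS]big_mkcond /=; apply: eq_bigr => z _; rewrite !inE andbC; case: (_ && _).
have := cardsUI X Y; have := cardsD (X :|: Y) A.
have : #|(X :|: Y) :&: A| <= #|A| by apply: subset_leq_card; apply: subsetIr.
rewrite cX cY cA; lia.
Qed.


Definition Fsum (X Y A Bs : {set C}) (W : nat -> {set C}) r :=
  \sum_(x in X) \sum_(y in Y) #|A :\ x :\ y| * #|Bs :\ x :\ y| * pe W x r y.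

Definition Chr m r := m * (m.-1 ^ 2 * (cseq m r).+1 + m.-1 * (m - 2) ^ 2 * cseq m r).

Lemma F_exact m (W0 : {set C}) W r : 2 <= m -> odd r -> #|W0| = m -> (forall i, W i = W0) ->
  Fsum W0 W0 W0 W0 W r = Chr m r.
Proof.
move=> m2 odr cW HW.
rewrite /Fsum /Chr -cW -sum_nat_const cW; apply: eq_bigr => x xW.
rewrite (bigD1 x) //= (pe_const m2 cW HW r xW xW) odr eqxx.
have := card_D2 W0 x x; rewrite eqxx xW /= cW => Hxx.
rewrite (eq_bigr (fun _ => (m - 2) ^ 2 * cseq m r)); last first.
  move=> y /andP [yW yx].
  rewrite (pe_const m2 cW HW r xW yW) odr eq_sym (negbTE yx) addn0.
  have := card_D2 W0 x y; rewrite yx yW xW cW /= => Hxy.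
  have -> : #|W0 :\ x :\ y| = m - 2 by lia.
  by rewrite -mulnn.
rewrite sum_nat_const.
have -> : #|[pred i in W0 | i != x]| = m.-1.
  have := cardsD1 x W0; rewrite xW cW => H.
  have -> : #|[pred i in W0 | i != x]| = #|W0 :\ x|.
    by apply: eq_card => i; rewrite !inE andbC.
  lia.
have -> : #|W0 :\ x :\ x| = m.-1 by lia.
rewrite addn1 !expnS expn0 !muln1; nia.
Qed.

Lemma term_lb m A (Bs : {set C}) (x y : C) e : #|A| = m -> #|Bs| = m -> 2 <= m ->
  (m - 2) ^ 2 * e + (x == y) * ((2 * m - 3) * e) +
  (x != y) * ((m - 2) * ((x \notin A) + (y \notin A) + ((x \notin Bs) + (y \notin Bs))) * e)
  <= #|A :\ x :\ y| * #|Bs :\ x :\ y| * e.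
Proof.
move=> cA cB m2.
have HA := card_D2 A x y; have HB := card_D2 Bs x y.
rewrite cA in HA; rewrite cB in HB.
case: m m2 cA cB HA HB => [|[|q]] // _ _ _ HA HB.
have -> : q.+2 - 2 = q by lia.
have -> : 2 * q.+2 - 3 = (2 * q).+1 by lia.
rewrite !expnS expn0 muln1.
case: (x =P y) => [<-|/eqP xy] /= in HA HB *.
  rewrite eqxx /= in HA HB.
  have Ha : q.+1 <= #|A :\ x :\ x| by case: (x \in A) HA => /=; lia.
  have Hb : q.+1 <= #|Bs :\ x :\ x| by case: (x \in Bs) HB => /=; lia.
  apply: leq_trans (leq_mul (leq_mul Ha Hb) (leqnn e)).
  rewrite mul0n addn0 mul1n; nia.
rewrite eq_sym xy /= in HA HB.
rewrite mul0n addn0 mul1n.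
move: HA HB; set a := #|A :\ x :\ y|; set b := #|Bs :\ x :\ y| => HA HB.
case: (x \in A) HA; case: (y \in A); case: (x \in Bs) HB; case: (y \in Bs) => /= HB HA;
  rewrite ?addn0 ?add0n in HA HB *;
  [have -> : a = q by lia|have -> : a = q by lia|have -> : a = q by lia|have -> : a = q by lia|
   have -> : a = q.+1 by lia|have -> : a = q.+1 by lia|have -> : a = q.+1 by lia|have -> : a = q.+1 by lia|
   have -> : a = q.+1 by lia|have -> : a = q.+1 by lia|have -> : a = q.+1 by lia|have -> : a = q.+1 by lia|
   have -> : a = q.+2 by lia|have -> : a = q.+2 by lia|have -> : a = q.+2 by lia|have -> : a = q.+2 by lia];
  first [have -> : b = q by lia|have -> : b = q.+1 by lia|have -> : b = q.+2 by lia]; nia.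
Qed.

Lemma cseq_ge m r : 3 <= m -> odd r -> 3 <= r -> m <= cseq m r.
Proof.
move=> m3 odr r3.
have Hc := cseq_closed r (ltnW m3); rewrite odr in Hc.
case: m m3 Hc => [|q] // m3 /= Hc.
have HP : q ^ 4 <= q ^ r.+1 by apply: leq_pexp2l => //; lia.
have H4 : q ^ 4 = q * q * (q * q) by rewrite !expnS expn0 muln1 !mulnA.
rewrite H4 in HP; move: Hc HP; set P := q ^ r.+1 => Hc HP.
have Hq2 : 2 * q <= q * q by nia.
have Hq4 : 2 * (q * q) <= q * q * (q * q) by nia.
rewrite leqNgt; apply/negP => Hlt.
have : q.+1 * cseq q.+1 r <= q.+1 * q by rewrite leq_mul2l; apply/orP; right; lia.
lia.
Qed.

Lemma arith2 m c t K : 3 <= m -> m <= c -> t < m -> 2 * m * (m - t) <= K ->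
  m * (2 * m - 3) * (c + 1) <= (2 * m - 3) * c * t + (m - 2) * c * K.
Proof.
move=> m3 mc tm HK.
have [u [Eu u1]] : exists u, m = t + u /\ 1 <= u by exists (m - t); lia.
have [n En] : exists n, m = n + 3 by exists (m - 3); lia.
have E1 : m - t = u by lia.
rewrite E1 in HK.
have H1 : (m - 2) * c * (2 * m * u) <= (m - 2) * c * K by rewrite leq_mul2l HK orbT.
apply: leq_trans (leq_add (leqnn _) H1).
have -> : m - 2 = n + 1 by lia.
have -> : 2 * m - 3 = 2 * n + 3 by lia.
have HP : n + 3 <= c * u by rewrite -En; apply: (leq_trans mc); exact: leq_pmulr.
have HQ : c * t + c * u = c * (n + 3) by rewrite -mulnDr -En Eu.
have H2 : (2 * n + 3) * (n + 3) <= (2 * n * n + 6 * n + 3) * (c * u).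
  apply: leq_trans (_ : (2 * n * n + 6 * n + 3) * (n + 3) <= _); last by rewrite leq_mul2l HP orbT.
  by rewrite leq_mul2r; apply/orP; right; nia.
rewrite En.
move: HQ H2; set P := c * u; set Q := c * t => HQ H2.
have -> : (n + 1) * c * (2 * (n + 3) * u) = (2 * (n + 1) * (n + 3)) * P.
  by rewrite /P; lia.
have -> : (2 * n + 3) * c * t = (2 * n + 3) * Q by rewrite /Q mulnA.
have -> : (n + 3) * (2 * n + 3) * (c + 1) = (2 * n + 3) * (c * (n + 3)) + (n + 3) * (2 * n + 3).
  by rewrite !mulnDr !mulnDl; lia.
have -> : (2 * (n + 1) * (n + 3)) * P = (2 * n + 3) * P + (2 * n * n + 6 * n + 3) * P.
  by rewrite -mulnDl; congr (_ * _); nia.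
rewrite -HQ mulnDr; lia.
Qed.
End G7.

Lemma chr_id m r : 3 <= m -> odd r ->
  Chr m r = (m - 2) ^ 2 * (m * m.-1 ^ r.+1) + m * (2 * m - 3) * (cseq m r + 1).
Proof.
move=> m3 odr.
have Hc := cseq_closed r (ltnW m3); rewrite odr in Hc.
rewrite -Hc /Chr.
move: (cseq m r) => c.
have [n ->] : exists n, m = n + 3 by exists (m - 3); lia.
have -> : (n + 3).-1 = n + 2 by lia.
have -> : n + 3 - 2 = n + 1 by lia.
have -> : 2 * (n + 3) - 3 = 2 * n + 3 by lia.
rewrite !expnS expn0 !muln1 !mulnDr !mulnDl; lia.
Qed.

Section G8.
Variable C : finType.

Lemma F_lb m (X Y A Bs : {set C}) (W : nat -> {set C}) r : 3 <= m -> odd r -> 3 <= r ->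
  #|X| = m -> #|Y| = m -> #|A| = m -> #|Bs| = m -> (forall i, #|W i| = m) ->
  Chr m r <= Fsum X Y A Bs W r.
Proof.
move=> m3 odr r3 cX cY cA cB HW.
have m2 : 2 <= m by lia.
have [Hm H1 _] := mu_vals r m2.
set c := cseq m r in H1 *.
set P := m.-1 ^ r.+1 in Hm *.
have pe_c : forall x y, c <= pe W x r y.
  by move=> x y; have := pe_lb HW r x (Z := [set y]); rewrite cards1 big_set1 H1; apply; lia.
set S1 := \sum_(x in X) \sum_(y in Y) (m - 2) ^ 2 * pe W x r y.
set S2 := \sum_(x in X) \sum_(y in Y) (x == y) * ((2 * m - 3) * pe W x r y).
set S3 := \sum_(x in X) \sum_(y in Y) (x != y) * ((m - 2) *
     ((x \notin A) + (y \notin A) + ((x \notin Bs) + (y \notin Bs))) * pe W x r y).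
have L0 : S1 + S2 + S3 <= Fsum X Y A Bs W r.
  rewrite /S1 /S2 /S3 -!big_split /=; apply: leq_sum => x _.
  rewrite -!big_split /=; apply: leq_sum => y _.
  exact: term_lb.
have L1 : (m - 2) ^ 2 * (m * P) <= S1.
  rewrite /S1 -cX -sum_nat_const big_distrr /=; apply: leq_sum => x _.
  rewrite -big_distrr /= leq_mul2l; apply/orP; right.
  by have := pe_lb HW r x (Z := Y); rewrite cY Hm; apply.
have E2 : S2 = (2 * m - 3) * \sum_(x in X) (x \in Y) * pe W x r x.
  rewrite /S2 big_distrr /=; apply: eq_bigr => x _.
  by rewrite (sum_eqF Y x (fun y => (2 * m - 3) * pe W x r y)) mulnCA.
have L3 : (m - 2) * c * (Kc X Y A + Kc X Y Bs) <= S3.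
  rewrite /Kc -big_split big_distrr /=; apply: leq_sum => x _.
  rewrite -big_split big_distrr /=; apply: leq_sum => y _.
  set d := nat_of_bool (x != y).
  set p1 := (x \notin A) + (y \notin A).
  set p2 := (x \notin Bs) + (y \notin Bs).
  have -> : (m - 2) * c * (d * p1 + d * p2) = d * ((m - 2) * (p1 + p2) * c) by lia.
  by rewrite leq_mul2l leq_mul2l pe_c !orbT.
apply: leq_trans L0.
rewrite chr_id //.
case: (eqVneq X Y) => [EXY|NXY].
  have L2 : (2 * m - 3) * (m * (cseq m r).+1) <= S2.
    rewrite E2 leq_mul2l; apply/orP; right.
    have := cyc_lb m3 odr r3 cX HW; rewrite /cyc EXY.
    by move=> H; apply: (leq_trans H); apply: leq_sum => x ->; rewrite mul1n.
  apply: leq_trans (leq_add (leq_add L1 L2) (leq0n S3)).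
  rewrite /P addn0 addn1; set q := 2 * m - 3; set z := m.-1 ^ r.+1; lia.
have Ht : #|X :&: Y| < m.
  have : #|X :&: Y| <= m by rewrite -cX; apply: subset_leq_card; apply: subsetIl.
  rewrite leq_eqVlt => /orP [/eqP Ht|//].
  have EX : X :&: Y = X by apply/eqP; rewrite eqEcard subsetIl Ht cX leqnn.
  have EY : X :&: Y = Y by apply/eqP; rewrite eqEcard subsetIr Ht cY leqnn.
  by rewrite -EX EY eqxx in NXY.
have L2 : (2 * m - 3) * c * #|X :&: Y| <= S2.
  rewrite E2 -mulnA leq_mul2l; apply/orP; right.
  have -> : #|X :&: Y| = \sum_(x in X) nat_of_bool (x \in Y).
    by rewrite sum_card_pred; apply: eq_card => x; rewrite !inE.
  rewrite big_distrr /=; apply: leq_sum => x _.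
  by rewrite mulnC leq_mul2l pe_c orbT.
have K1 := Kc_lb m2 cX cY cA.
have K2 := Kc_lb m2 cX cY cB.
have A2 := arith2 m3 (cseq_ge m3 odr r3) Ht (_ : 2 * m * (m - #|X :&: Y|) <= Kc X Y A + Kc X Y Bs).
rewrite -/c in A2.
apply: leq_trans (leq_add (leq_add L1 L2) L3).
rewrite -addnA leq_add2l; apply: A2; lia.
Qed.
End G8.

Lemma card_list_set B (L : seq nat) : uniq L -> (forall c, c \in L -> c < B) ->
  #|[set c : 'I_B | val c \in L]| = size L.
Proof.
move=> uL HL.
have -> : #|[set c : 'I_B | val c \in L]| = #|[pred c : 'I_B | c \in pmap insub L]|.
  by apply: eq_card => c; rewrite !inE mem_pmap_sub.
rewrite (card_uniqP _); last exact: pmap_sub_uniq.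
rewrite size_pmap_sub; apply/eqP; rewrite -all_count; apply/allP => c cL.
exact: HL.
Qed.

Lemma color_bound_lt (V : finType) (L : V -> seq nat) v c : c \in L v -> c < color_bound L.
Proof.
move=> cL; rewrite /color_bound.
apply: leq_trans (leq_bigmax v).
by apply: (leq_bigmax_seq c cL).
Qed.

Section Final.
Variables k m : nat.
Hypothesis k2 : 2 <= k.
Hypothesis m3 : 3 <= m.
Local Notation l := (tl 2 2 (2 * k)).
Local Notation V := (theta_vertex l).
Local Notation r := (2 * k).-1.

Let k1 : 1 <= k. Proof. lia. Qed.
Let odr : odd r.
Proof. have -> : (2 * k).-1 = (k.-1).*2.+1 by rewrite -muln2; lia. by rewrite /= odd_double. Qed.
Let r3 : 3 <= r. Proof. lia. Qed.

Lemma count_S B (S : V -> {set 'I_B}) :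
  #|[set f : {ffun V -> 'I_B} | [forall v, f v \in S v] &&
      proper (theta_adj l) (fun v => val (f v))]| =
  Fsum (S (vu k)) (S (vw k)) (S (va k)) (S (vb k)) (@Wp k _ S) r.
Proof. exact: (count_formula k1 val_inj S). Qed.

Lemma chrom_val : chrom V (theta_adj l) m = Chr m r.
Proof.
rewrite /chrom.
have -> : #|[set f : {ffun V -> 'I_m} | proper (theta_adj l) (fun v => val (f v))]| =
   #|[set f : {ffun V -> 'I_m} | [forall v, f v \in (fun _ => [set: 'I_m]) v] &&
      proper (theta_adj l) (fun v => val (f v))]|.
  apply: eq_card => f; rewrite !inE.
  by have -> : [forall v, f v \in [set: 'I_m]] by apply/forallP => v; rewrite inE.
rewrite count_S.
apply: (F_exact (m := m) (W0 := [set: 'I_m])) => //; first by lia.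
  by rewrite cardsT card_ord.
by move=> i; rewrite /Wp; case: insub.
Qed.

Lemma P_list_eq (L : V -> seq nat) :
  P_list (theta_adj l) L =
  let S := fun v => [set c : 'I_(color_bound L) | val c \in L v] in
  Fsum (S (vu k)) (S (vw k)) (S (va k)) (S (vb k)) (@Wp k _ S) r.
Proof.
rewrite /P_list /= -count_S; apply: eq_card => f; rewrite !inE; congr (_ && _).
by apply: eq_forallb => v; rewrite inE.
Qed.

Lemma card_S (L : V -> seq nat) v : m_assignment m L ->
  #|[set c : 'I_(color_bound L) | val c \in L v]| = m.
Proof.
move=> HL; have [uL sL] := HL v.
rewrite card_list_set // => c cL; exact: color_bound_lt cL.
Qed.

Lemma main_thm : is_list_color_fun V (theta_adj l) m (chrom V (theta_adj l) m).
Proof.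
have HA : m_assignment m (fun _ : V => iota 0 m).
  by move=> v; split; [exact: iota_uniq | exact: size_iota].
split.
  exists (fun _ => iota 0 m); split => //.
  rewrite P_list_eq chrom_val /=.
  apply: (F_exact (m := m)) => //; first by lia.
    exact: (card_S (vu k) HA).
  by move=> i; rewrite /Wp; case: insub.
move=> L HL; rewrite chrom_val P_list_eq /=.
apply: F_lb => //; try exact: card_S.
by move=> i; rewrite /Wp; case: insub => [j|]; exact: card_S.
Qed.
End Final.

Theorem theorem11 (k m : nat) : 2 <= k -> 3 <= m ->
  let l := tl 2 2 (2 * k) in
  is_list_color_fun (theta_vertex l) (theta_adj l) m
                    (chrom (theta_vertex l) (theta_adj l) m).
Proof. move=> k2 m3 /=; exact: main_thm. Qed.
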